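(* Let $p$ be a prime and $R$ a local ring which is a finitely generated $\mathbb{Z}_p$-algebra and finitely generated as a $\mathbb{Z}_p$-module, with $\mathbb{Z}_p\subset R$ and residue field $\mathbb{F}_R$. For a finite $R$-module $M$ set $$d_M=\dim_{\mathbb{F}_R}\mathrm{Tor}^R_1(M,\mathbb{F}_R)-\dim_{\mathbb{F}_R}(M\otimes_R\mathbb{F}_R).$$ Then $d_M\geq 0$ for every finite $R$-module $M$. Moreover, $M\in T_R$ if and only if $d_M=0$.
   Context: $T_R$ denotes the set of (isomorphism classes of) finite $R$-modules that occur as the cokernel of some $R$-linear endomorphism of $R^N$, for some $N\geq 1$. *)

(* Defs.v *)
From mathcomp Require Import all_boot all_order all_algebra.
Set Implicit Arguments. Unset Strict Implicit. Unset Printing Implicit Defensive.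
Import GRing.Theory.
Local Open Scope ring_scope.

(* An element of Z_p is a compatible sequence of residues x n in [0, p^n). *)
Definition padic_seq (p : nat) (x : nat -> nat) : Prop :=
  forall n, (x n %% p ^ n = x n)%N /\ (x n.+1 %% p ^ n = x n)%N.

Definition Zpadic (p : nat) : Type := {x : nat -> nat | padic_seq p x}.

Lemma padic_add_proof p (x y : Zpadic p) :
  padic_seq p (fun n => (sval x n + sval y n) %% p ^ n)%N.
Proof.
case: x => x hx; case: y => y hy n /=; split; first by rewrite modn_mod.
rewrite (modn_dvdm _ (dvdn_exp2l p (leqnSn n))) -modnDm (hx n).2 (hy n).2.
by [].
Qed.

Lemma padic_mul_proof p (x y : Zpadic p) :
  padic_seq p (fun n => (sval x n * sval y n) %% p ^ n)%N.
Proof.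
case: x => x hx; case: y => y hy n /=; split; first by rewrite modn_mod.
rewrite (modn_dvdm _ (dvdn_exp2l p (leqnSn n))) -modnMm (hx n).2 (hy n).2.
by [].
Qed.

Lemma padic_one_proof p : padic_seq p (fun n => 1 %% p ^ n)%N.
Proof.
move=> n; split; first by rewrite modn_mod.
by rewrite (modn_dvdm _ (dvdn_exp2l p (leqnSn n))).
Qed.

Definition Zp_add p (x y : Zpadic p) : Zpadic p := exist _ _ (padic_add_proof x y).
Definition Zp_mul p (x y : Zpadic p) : Zpadic p := exist _ _ (padic_mul_proof x y).
Definition Zp_one p : Zpadic p := exist _ _ (padic_one_proof p).

Definition Zp_embedding (p : nat) (R : comUnitRingType) (iota : Zpadic p -> R) : Prop :=
  [/\ forall x y, iota (Zp_add x y) = iota x + iota y,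
      forall x y, iota (Zp_mul x y) = iota x * iota y,
      iota (Zp_one p) = 1 & injective iota].

Definition Zp_finite_module (p : nat) (R : comUnitRingType) (iota : Zpadic p -> R) : Prop :=
  exists (n : nat) (s : 'I_n -> R),
    forall r : R, exists c : 'I_n -> Zpadic p, r = \sum_(i < n) iota (c i) * s i.

Definition Zp_finite_algebra (p : nat) (R : comUnitRingType) (iota : Zpadic p -> R) : Prop :=
  exists (n : nat) (s : 'I_n -> R),
    forall r : R, exists (d : nat) (c : {ffun 'I_d -> Zpadic p}) (e : 'I_d -> 'I_n -> nat),
      r = \sum_(j < d) iota (c j) * \prod_(i < n) s i ^+ e j i.

(* R is local: the non-units form an ideal (the maximal ideal m);
   the residue field is F_R = R / m. *)
Definition local_ring (R : comUnitRingType) : Prop :=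
  forall x y : R, x \notin GRing.unit -> y \notin GRing.unit ->
    x + y \notin GRing.unit.

(* F_R-dimension of the subquotient U/W of an R-module V (with m U <= W <= U),
   via lifts: n elements of U whose images form an F_R-basis of U/W. *)
Definition res_dim (R : comUnitRingType) (V : lmodType R) (U W : V -> Prop)
    (n : nat) : Prop :=
  exists x : 'I_n -> V,
    [/\ forall i, U (x i),
        forall u, U u -> exists r : 'I_n -> R, W (u - \sum_(i < n) r i *: x i) &
        forall r : 'I_n -> R, W (\sum_(i < n) r i *: x i) ->
          forall i, r i \notin GRing.unit].

Definition mM (R : comUnitRingType) (M : lmodType R) (x : M) : Prop :=
  exists (k : nat) (s : 'I_k -> R) (y : 'I_k -> M),
    (forall j, s j \notin GRing.unit) /\ x = \sum_(j < k) s j *: y j.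

(* dim_{F_R} (M (x)_R F_R) = dim_{F_R} (M / m M) = n *)
Definition tensor_res_dim (R : comUnitRingType) (M : lmodType R) (n : nat) : Prop :=
  res_dim (fun _ : M => True) (@mM R M) n.

Definition finite_module (R : comUnitRingType) (M : lmodType R) : Prop :=
  exists s : seq M, forall x : M, x \in s.

Definition lincomb (R : comUnitRingType) (M : lmodType R) (b : nat)
    (g : 'I_b -> M) (u : 'cV[R]_b) : M :=
  \sum_(i < b) u i 0 *: g i.

(* R^c --B--> R^a --A--> R^b --g--> M --> 0 is exact
   (the start of a free resolution of M) *)
Definition free_resolution (R : comUnitRingType) (M : lmodType R) (a b c : nat)
    (g : 'I_b -> M) (A : 'M[R]_(b, a)) (B : 'M[R]_(a, c)) : Prop :=
  [/\ forall x : M, exists u : 'cV[R]_b, lincomb g u = x,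
      forall u : 'cV[R]_b, lincomb g u = 0 <-> exists v : 'cV[R]_a, u = A *m v &
      forall v : 'cV[R]_a, A *m v = 0 <-> exists w : 'cV[R]_c, v = B *m w].

Definition in_max_ideal_vec (R : comUnitRingType) (k : nat) (v : 'cV[R]_k) : Prop :=
  forall i, v i 0 \notin GRing.unit.

(* dim_{F_R} Tor_1^R(M, F_R) = n, computed as the first homology of the
   resolution tensored with F_R:  ker(A mod m) / im(B mod m). *)
Definition tor1_res_dim (R : comUnitRingType) (a b c : nat)
    (A : 'M[R]_(b, a)) (B : 'M[R]_(a, c)) (n : nat) : Prop :=
  res_dim (fun v : 'cV[R]_a => in_max_ideal_vec (A *m v))
          (fun v : 'cV[R]_a => exists (w : 'cV[R]_c) (z : 'cV[R]_a),
                                  in_max_ideal_vec z /\ v = B *m w + z) n.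

(* M in T_R : M is isomorphic to the cokernel of an endomorphism A of R^N, N >= 1 *)
Definition in_TR (R : comUnitRingType) (M : lmodType R) : Prop :=
  exists (N : nat) (A : 'M[R]_N) (g : 'I_N -> M),
    [/\ (0 < N)%N,
        forall x : M, exists u : 'cV[R]_N, lincomb g u = x &
        forall u : 'cV[R]_N, lincomb g u = 0 <-> exists v : 'cV[R]_N, u = A *m v].

(* Main.v *)
Require Import Defs.
From HB Require Import structures.
From mathcomp Require Import all_boot all_order all_algebra ring_quotient generic_quotient.
From mathcomp Require Import zify.
From Stdlib Require Import ProofIrrelevance FunctionalExtensionality Classical_Prop.
Set Implicit Arguments. Unset Strict Implicit. Unset Printing Implicit Defensive.
Import GRing.Theory.
Local Open Scope ring_scope.

Section Gen.
Variable R : comUnitRingType.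
Variable M : lmodType R.

Lemma lincombD b (g : 'I_b -> M) u v : lincomb g (u + v) = lincomb g u + lincomb g v.
Proof. by rewrite /lincomb -big_split; apply: eq_bigr => i _; rewrite mxE scalerDl. Qed.

Lemma lincombB b (g : 'I_b -> M) u v : lincomb g (u - v) = lincomb g u - lincomb g v.
Proof. by rewrite /lincomb -sumrB; apply: eq_bigr => i _; rewrite !mxE scalerBl. Qed.

Lemma lincombZ b (g : 'I_b -> M) k u : lincomb g (k *: u) = k *: lincomb g u.
Proof. by rewrite /lincomb scaler_sumr; apply: eq_bigr => i _; rewrite mxE scalerA. Qed.

Lemma lincomb0 b (g : 'I_b -> M) : lincomb g 0 = 0.
Proof. by rewrite /lincomb big1 // => i _; rewrite mxE scale0r. Qed.

Lemma lincomb_sum b n (g : 'I_b -> M) (r : 'I_n -> R) (u : 'I_n -> 'cV[R]_b) :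
  lincomb g (\sum_j r j *: u j) = \sum_j r j *: lincomb g (u j).
Proof.
rewrite /lincomb; under eq_bigr do rewrite summxE scaler_suml.
rewrite exchange_big; apply: eq_bigr => j _; rewrite scaler_sumr.
by apply: eq_bigr => i _; rewrite !mxE scalerA.
Qed.

Lemma lincomb_mul b n (g : 'I_b -> M) (X : 'M[R]_(b, n)) (w : 'cV[R]_n) :
  lincomb g (X *m w) = lincomb (fun j => lincomb g (col j X)) w.
Proof.
rewrite /lincomb; under eq_bigr do rewrite mxE scaler_suml.
rewrite exchange_big; apply: eq_bigr => j _; rewrite scaler_sumr.
by apply: eq_bigr => i _; rewrite !mxE scalerA mulrC.
Qed.

Lemma lincomb_delta b (g : 'I_b -> M) j : lincomb g (delta_mx j 0) = g j.
Proof.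
rewrite /lincomb (bigD1 j) //= big1 ?addr0 => [|i /negPf ne].
  by rewrite mxE !eqxx scale1r.
by rewrite mxE ne scale0r.
Qed.

End Gen.

Lemma exists_cols (R : Type) m n (P : 'I_n -> 'cV[R]_m -> Prop) :
  (forall j, exists v, P j v) -> exists X : 'M[R]_(m, n), forall j, P j (col j X).
Proof.
move=> h; have [f hf] := fin_all_exists h.
exists (\matrix_(i, j) f j i 0) => j.
suff -> : col j (\matrix_(i, j) f j i 0) = f j by [].
by apply/matrixP => i k; rewrite !mxE ord1.
Qed.

Lemma colspan (R : pzRingType) m n p (X : 'M[R]_(m, n)) (Y : 'M[R]_(m, p)) :
  (forall j, exists y, col j X = Y *m y) -> exists Q, X = Y *m Q.
Proof.
move=> h; have [Q hQ] := exists_cols h; exists Q.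
apply/matrixP => i j; have e : col j X = col j (Y *m Q) by rewrite hQ !colE mulmxA.
by have := congr1 (fun Z : 'M[R]_(m,1) => Z i 0) e; rewrite !mxE.
Qed.

Lemma ker_eq0 (R : pzRingType) m n (X : 'M[R]_(m, n)) :
  (forall w : 'cV[R]_n, X *m w = 0) -> X = 0.
Proof.
move=> h; apply/matrixP => i j; have := congr1 (fun Z : 'M[R]_(m,1) => Z i 0) (h (delta_mx j 0)).
by rewrite -colE !mxE.
Qed.

Lemma natZp_proof p m : padic_seq p (fun n => m %% p ^ n)%N.
Proof.
move=> n; split; first by rewrite modn_mod.
by rewrite (modn_dvdm _ (dvdn_exp2l p (leqnSn n))).
Qed.

Definition natZp p m : Zpadic p := exist _ _ (natZp_proof p m).

Lemma Zp_ext p (x y : Zpadic p) : sval x =1 sval y -> x = y.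
Proof.
case: x => x hx; case: y => y hy /= h.
have e := functional_extensionality _ _ h; subst y.
by rewrite (proof_irrelevance _ hx hy).
Qed.

Lemma iota_nat p (R : comUnitRingType) (iota : Zpadic p -> R) :
  Zp_embedding iota -> forall m, iota (natZp p m) = m%:R.
Proof.
case=> hadd _ h1 _.
have h0 : iota (natZp p 0) = 0.
  have e : natZp p 0 = Defs.Zp_add (natZp p 0) (natZp p 0).
    by apply: Zp_ext => n /=; rewrite !mod0n.
  have : iota (natZp p 0) + 0 = iota (natZp p 0) + iota (natZp p 0).
    by rewrite addr0 -hadd -e.
  by move/addrI => <-.
elim=> [|m IH]; first by rewrite h0.
have e : natZp p m.+1 = Defs.Zp_add (natZp p m) (Defs.Zp_one p).
  by apply: Zp_ext => n /=; rewrite modnDm addn1.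
by rewrite e hadd IH h1 mulrSr.
Qed.

Lemma natR_neq0 p (R : comUnitRingType) (iota : Zpadic p -> R) m :
  prime p -> Zp_embedding iota -> (0 < m)%N -> (m%:R : R) != 0.
Proof.
move=> hp he hm; apply/eqP => h.
have e : natZp p m = natZp p 0.
  by have [_ _ _ hinj] := he; apply: hinj; rewrite !(iota_nat he) h.
have := congr1 (fun x => sval x m) e => /=.
rewrite mod0n modn_small; first by move=> m0; rewrite m0 in hm.
by apply: ltn_expl; apply: prime_gt1.
Qed.

Lemma det_thin0 (R : comPzRingType) k l (P : 'M[R]_(k + l.+1, k)) (Q : 'M_(k, k + l.+1)) :
  \det (P *m Q) = 0.
Proof.
have -> : P *m Q = row_mx P 0 *m col_mx Q (0 : 'M_(l.+1, k + l.+1)).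
  by rewrite mul_row_col mul0mx addr0.
rewrite det_mulmx -det_tr tr_row_mx (expand_det_row _ (rshift k ord0)).
by rewrite big1 ?mul0r // => j _; rewrite col_mxEd trmx0 mxE mul0r.
Qed.

Lemma det_thin (R : comPzRingType) k b (P : 'M[R]_(b, k)) (Q : 'M_(k, b)) :
  (k < b)%N -> \det (P *m Q) = 0.
Proof.
move=> kb; move: P Q; rewrite -(subnKC kb) addSnnS => P Q; exact: det_thin0.
Qed.

Lemma kill (R : comUnitRingType) (M : lmodType R) :
  finite_module M -> exists N, (0 < N)%N /\ forall x : M, x *+ N = 0.
Proof.
case=> l hl; exists (size l)`!; split; first exact: fact_gt0.
move=> x.
have [i [j [ij [jl e]]]] : exists i j, (i < j)%N /\ (j <= size l)%N /\ x *+ i = x *+ j.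
  apply: NNPP => hn.
  have inj : {in iota 0 (size l).+1 &, injective (fun i => x *+ i)}.
    move=> i j; rewrite !mem_iota /= !add0n => hi hj e.
    case: (ltngtP i j) => // hij; exfalso; apply: hn.
      by exists i, j; split => //; split => //.
    by exists j, i; split => //; split => //.
  have := @uniq_leq_size _ _ l (etrans (map_inj_in_uniq inj) (iota_uniq 0 (size l).+1)).
  move=> /(_ (fun y _ => hl y)); rewrite size_map size_iota ltnn; done.
have e2 : x *+ (j - i) = 0.
  have : x *+ i + x *+ (j - i) = x *+ i + 0.
    by rewrite -mulrnDr (subnKC (ltnW ij)) addr0 e.
  by move/addrI.
have /dvdnP [q ->] : (j - i %| (size l)`!)%N.
  by apply: dvdn_fact; rewrite subn_gt0 ij (leq_trans (leq_subr _ _) jl).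
by rewrite mulnC mulrnA e2 mul0rn.
Qed.

Local Open Scope quotient_scope.
Section Res.
Variable R : comUnitRingType.
Hypothesis Hloc : local_ring R.

Definition nonunit : {pred R} := [pred x | x \notin GRing.unit].

Lemma nonunit_closed : idealr_closed nonunit.
Proof.
split; rewrite ?inE ?unitr0 ?unitr1 //.
move=> a u v; rewrite !inE => hu hv; apply: Hloc => //.
by rewrite unitrM negb_and hu orbT.
Qed.

HB.instance Definition _ := isIdealr.Build R nonunit nonunit_closed.

Definition F0 := {ideal_quot nonunit}.
HB.instance Definition _ := GRing.ComNzRing.on F0.
Definition rf (x : R) : F0 := \pi x.

Lemma rf_eq0 x : (rf x == 0) = (x \notin GRing.unit).
Proof. by rewrite /rf -pi_zeror -Quotient.idealrBE subr0 inE. Qed.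

Lemma rfD x y : rf (x + y) = rf x + rf y.
Proof. by rewrite /rf pi_addr. Qed.
Lemma rfM x y : rf (x * y) = rf x * rf y.
Proof. by rewrite /rf pi_mulr. Qed.
Lemma rf1 : rf 1 = 1.
Proof. by rewrite /rf pi_oner. Qed.
Lemma rfN x : rf (- x) = - rf x.
Proof. by rewrite /rf pi_oppr. Qed.
Lemma rfK (y : F0) : rf (repr y) = y.
Proof. by rewrite /rf reprK. Qed.

Definition finv (y : F0) : F0 := rf (repr y)^-1.
Lemma finv_mulVf (y : F0) : y != 0 -> finv y * y = 1.
Proof.
move=> hy; rewrite /finv -{2}(rfK y) -rfM mulVr ?rf1 //.
by apply: contraR hy; rewrite -rf_eq0 rfK.
Qed.
Lemma finv0 : finv 0 = 0.
Proof.
rewrite /finv; apply/eqP; rewrite rf_eq0 unitrV -rf_eq0 rfK //.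
Qed.

HB.instance Definition _ := GRing.ComNzRing_isField.Build F0 finv_mulVf finv0.

Lemma rf0 : rf 0 = 0.
Proof. by rewrite /rf pi_zeror. Qed.

HB.instance Definition _ := GRing.isNmodMorphism.Build R F0 rf (rf0, rfD).
HB.instance Definition _ := GRing.isMonoidMorphism.Build R F0 rf (rf1, rfM).

Local Notation mf := (map_mx rf).
Definition rowv k (v : 'cV[R]_k) : 'rV[F0]_k := (mf v)^T.
Definition lift m n (X : 'M[F0]_(m, n)) : 'M[R]_(m, n) := map_mx (@repr _ F0) X.

Lemma liftK m n (X : 'M[F0]_(m, n)) : mf (lift X) = X.
Proof. by apply/matrixP => i j; rewrite !mxE rfK. Qed.

Lemma nonunit_rf (x : R) : x \notin GRing.unit <-> rf x = 0.
Proof. by rewrite -rf_eq0; split => /eqP. Qed.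

Lemma max_vec k (v : 'cV[R]_k) : in_max_ideal_vec v <-> mf v = 0.
Proof.
split => [h | h i]; first by apply/matrixP => i j; rewrite !mxE ord1; apply/nonunit_rf.
by apply/nonunit_rf; move/matrixP: h => /(_ i 0); rewrite !mxE.
Qed.



Lemma rowvD k (v w : 'cV[R]_k) : rowv (v + w) = rowv v + rowv w.
Proof. by apply/rowP => j; rewrite !mxE rfD. Qed.
Lemma rowvB k (v w : 'cV[R]_k) : rowv (v - w) = rowv v - rowv w.
Proof. by apply/rowP => j; rewrite !mxE rmorphB. Qed.
Lemma rowv_comb k n (x : 'I_n -> 'cV[R]_k) (r : 'I_n -> R) :
  rowv (\sum_i r i *: x i) = (\row_i rf (r i)) *m \matrix_(i < n) rowv (x i).
Proof.
apply/rowP => j; rewrite !mxE summxE rmorph_sum.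
by apply: eq_bigr => i _; rewrite !mxE rmorphM.
Qed.

Lemma res_dim_rank k m1 m2 (U W : 'cV[R]_k -> Prop) (Ub : 'M[F0]_(m1,k))
    (Wb : 'M[F0]_(m2,k)) n :
  (forall v, U v -> (rowv v <= Ub)%MS) ->
  (forall e : 'rV[F0]_k, (e <= Ub)%MS -> exists v, U v /\ rowv v = e) ->
  (Wb <= Ub)%MS ->
  (forall v, W v <-> (rowv v <= Wb)%MS) ->
  res_dim U W n -> (n + \rank Wb)%N = \rank Ub.
Proof.
move=> hU hUs hWU hW [x [xU xsp xind]].
pose X := \matrix_(i < n) rowv (x i).
have rowX i : row i X = rowv (x i) by rewrite rowK.
have indep (u : 'rV[F0]_n) : (u *m X <= Wb)%MS -> u = 0.
  move=> h; pose r i := repr (u 0 i).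
  have : W (\sum_i r i *: x i).
    apply/hW; rewrite rowv_comb.
    suff -> : (\row_i rf (r i)) = u by [].
    by apply/rowP => i; rewrite mxE rfK.
  move/xind => hr; apply/rowP => i; rewrite mxE; have := hr i.
  by move/nonunit_rf; rewrite rfK.
have XU : (X <= Ub)%MS by apply/row_subP => i; rewrite rowX; apply: hU.
have UXW : (Ub <= X + Wb)%MS.
  apply/row_subP => i; have [v [Uv ev]] := hUs (row i Ub) (row_sub i Ub).
  have [r /hW hr] := xsp v Uv.
  rewrite -ev -(subrK (rowv (\sum_i r i *: x i)) (rowv v)) -rowvB addrC.
  by apply: addmx_sub_adds => //; rewrite rowv_comb submxMl.
have eqU : (X + Wb :=: Ub)%MS by apply/eqmxP; rewrite UXW addsmx_sub XU hWU.
have cap0 : (X :&: Wb)%MS = 0.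
  have [D hD] := submxP (capmxSl X Wb).
  apply/row_matrixP => i; rewrite row0 hD row_mul (indep (row i D)) ?mul0mx //.
  by rewrite -row_mul -hD (submx_trans (row_sub _ _)) // capmxSr.
have rX : \rank X = n.
  apply/eqP; change (row_free X); rewrite -kermx_eq0; apply/eqP; apply/row_matrixP => i.
  by rewrite row0 (indep (row i (kermx X))) // -row_mul mulmx_ker row0 sub0mx.
by rewrite -eqU mxrank_disjoint_sum // rX.
Qed.

Lemma gen_lemma a b c (A : 'M[R]_(b,a)) (B : 'M[R]_(a,c)) : A *m B = 0 ->
  exists k (S : 'M[R]_(a,k)) (T : 'M[R]_(k,a)),
    (k + \rank (mf B))%N = a /\ A = A *m S *m T.
Proof.
move=> AB0.
pose Bt := (mf B)^T.
pose Cb := row_base (Bt^C)%MS.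
exists (\rank (Bt^C)%MS).
have hk : (\rank (Bt^C)%MS + \rank (mf B))%N = a.
  by rewrite mxrank_compl -(mxrank_tr (mf B)) subnK // rank_leq_col.
have full : (1%:M <= col_mx Cb Bt)%MS.
  have h1 : (1%:M <= Bt + Bt^C)%MS by rewrite sub1mx addsmx_compl_full.
  apply: submx_trans h1 _; rewrite -addsmxE addsmx_sub addsmxSr /=.
  apply: submx_trans (addsmxSl Cb Bt); rewrite /Cb eq_row_base //.
have [D hD] := submxP full.
pose D1 := lsubmx D; pose D2 := rsubmx D.
have e1 : 1%:M = Cb^T *m D1^T + mf B *m D2^T.
  have := congr1 trmx hD; rewrite trmx1 -(hsubmxK D) mul_row_col => ->.
  by rewrite linearD /= !trmx_mul trmxK.
pose S := lift Cb^T; pose T0 := lift D1^T; pose H := lift D2^T.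
pose E := S *m T0 + B *m H.
have mE : mf E = 1%:M by rewrite map_mxD !map_mxM !liftK -e1.
have uE : E \in unitmx.
  have h : rf (\det E) = 1 by rewrite -det_map_mx mE det1.
  by rewrite unitmxE; apply/negPn; rewrite -rf_eq0 h oner_eq0.
exists S, (T0 *m invmx E); split => //.
have AE : A *m E = A *m S *m T0.
  by rewrite mulmxDr (mulmxA A B) AB0 mul0mx addr0 mulmxA.
by rewrite mulmxA -AE mulmxK.
Qed.

Lemma mu_bound m a2 c2 n (A2 : 'M[R]_(m,a2)) (B2 : 'M[R]_(a2,c2)) (C : 'M[R]_(m,n)) :
  (forall v : 'cV[R]_a2, A2 *m v = 0 -> exists w : 'cV[R]_c2, v = B2 *m w) ->
  (forall v : 'cV[R]_a2, exists y : 'cV[R]_n, A2 *m v = C *m y) ->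
  (forall y : 'cV[R]_n, exists v : 'cV[R]_a2, C *m y = A2 *m v) ->
  (a2 <= n + \rank (mf B2))%N.
Proof.
move=> h1 h2 h3.
have [Q hQ] : exists Q, A2 = C *m Q by apply: colspan => j; rewrite colE; apply: h2.
have [P hP] : exists P, C = A2 *m P by apply: colspan => j; rewrite colE; apply: h3.
have [H hH] : exists H, 1%:M - P *m Q = B2 *m H.
  apply: colspan => j; apply: h1.
  by rewrite colE mulmxA mulmxBr mulmx1 mulmxA -hP -hQ subrr mul0mx.
have e0 : 1%:M = P *m Q + B2 *m H by rewrite -hH addrC subrK.
have e : (1%:M : 'M[F0]_a2) = mf P *m mf Q + mf B2 *m mf H.
  by rewrite -!map_mxM -map_mxD -e0 map_mx1.
have := mxrank_add (mf P *m mf Q) (mf B2 *m mf H); rewrite -e mxrank1 => h.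
apply: leq_trans h _; apply: leq_add.
  exact: leq_trans (mxrankM_maxr _ _) (rank_leq_row _).
exact: mxrankM_maxl.
Qed.

Lemma main_local (p : nat) (iota : Zpadic p -> R) : prime p -> Zp_embedding iota ->
  forall (M : lmodType R), finite_module M ->
  forall (a b c : nat) (g : 'I_b -> M) (A : 'M[R]_(b, a)) (B : 'M[R]_(a, c)),
    free_resolution g A B ->
    forall t s : nat, tor1_res_dim A B t -> tensor_res_dim M s ->
      (s <= t)%N /\ (in_TR M <-> t = s).
Proof.
move=> hp he M hfin a b c g A B [hsurj hkerg hkerA] t s ht hs.
have AB0 : A *m B = 0.
  by apply: ker_eq0 => w; rewrite -mulmxA; apply/hkerA; exists w.
have hs' : (s + \rank (mf A)^T)%N = b.
  have := @res_dim_rank b b a (fun _ => True) (fun v => mM (lincomb g v))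
    1%:M (mf A)^T s; rewrite mxrank1; apply.
  - by move=> v _; rewrite submx1.
  - by move=> e _; exists (lift e^T); split => //; rewrite /rowv liftK trmxK.
  - by rewrite submx1.
  - move=> v; split.
    + case=> k [sc [y [hsc hy]]].
      have [w hw] := fin_all_exists (fun j => hsurj (y j)).
      have : lincomb g (v - \sum_j sc j *: w j) = 0.
        rewrite lincombB lincomb_sum hy.
        have -> : \sum_j sc j *: lincomb g (w j) = \sum_j sc j *: y j.
          by apply: eq_bigr => j _; rewrite hw.
        by rewrite subrr.
      move/hkerg => [z hz].
      have -> : v = A *m z + \sum_j sc j *: w j by rewrite -hz subrK.
      rewrite rowvD rowv_comb.
      have -> : (\row_j rf (sc j)) = 0.
        by apply/rowP => j; rewrite !mxE; apply/nonunit_rf.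
      by rewrite mul0mx addr0 /rowv map_mxM trmx_mul submxMl.
    + case/submxP => D hD.
      pose z := lift D^T.
      have hz : mf (v - A *m z) = 0.
        by rewrite map_mxB map_mxM liftK -[mf v]trmxK -/(rowv v) hD trmx_mul trmxK subrr.
      have -> : v = A *m z + (v - A *m z) by rewrite addrC subrK.
      rewrite lincombD.
      have -> : lincomb g (A *m z) = 0 by apply/hkerg; exists z.
      rewrite add0r; exists b, (fun i => (v - A *m z) i 0), g; split => //.
      move=> i; apply/nonunit_rf.
      by have := congr1 (fun Z : 'M[F0]_(b,1) => Z i 0) hz; rewrite !mxE.
  - case: hs => x [_ xsp xind].
    have [u hu] := fin_all_exists (fun i => hsurj (x i)).
    exists u; split => //.
    + move=> v _; have [r hr] := xsp (lincomb g v) I; exists r.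
      by rewrite lincombB lincomb_sum; under eq_bigr do rewrite hu.
    + by move=> r; rewrite lincomb_sum; under eq_bigr do rewrite hu; exact: xind.
have ht' : (t + \rank (mf B)^T)%N = \rank (kermx (mf A)^T).
  apply: (res_dim_rank _ _ _ _ ht).
  - move=> v /max_vec hv.
    by rewrite sub_kermx /rowv -trmx_mul -map_mxM hv trmx0.
  - move=> e; rewrite sub_kermx => /eqP he0; exists (lift e^T); split; last first.
      by rewrite /rowv liftK trmxK.
    by apply/max_vec; rewrite map_mxM liftK -[mf A]trmxK -trmx_mul he0 trmx0.
  - by rewrite sub_kermx -trmx_mul -map_mxM AB0 map_mx0 trmx0.
  - move=> v; split.
    + case=> w [z [/max_vec hz ->]].
      by rewrite rowvD {2}/rowv hz trmx0 addr0 /rowv map_mxM trmx_mul submxMl.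
    + case/submxP => D hD; exists (lift D^T), (v - B *m lift D^T).
      split; last by rewrite addrC subrK.
      apply/max_vec.
      by rewrite map_mxB map_mxM liftK -[mf v]trmxK -/(rowv v) hD trmx_mul trmxK subrr.
rewrite mxrank_ker in ht'.
rewrite !mxrank_tr in hs' ht'.
have rAa : (\rank (mf A) <= a)%N by rewrite -mxrank_tr rank_leq_row.
have [k [S [T [hk hAST]]]] := gen_lemma AB0.
have key1 : (b <= k)%N.
  rewrite leqNgt; apply/negP => kb.
  have [N [N0 hN]] := kill hfin.
  have [D hD] : exists D : 'M[R]_(a,b), forall j, N%:R *: delta_mx j 0 = A *m col j D.
    apply: (@exists_cols _ _ _ (fun j v => N%:R *: delta_mx j 0 = A *m v)) => j.
    apply/hkerg.
    by rewrite lincombZ lincomb_delta scaler_nat hN.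
  have AD : A *m D = N%:R *: 1%:M.
    apply/matrixP => i j; have := congr1 (fun Z : 'M[R]_(b,1) => Z i 0) (hD j).
    rewrite colE mulmxA -colE !mxE eqxx andbT => e; by rewrite -e.
  have := det_thin (A *m S) (T *m D) kb.
  rewrite mulmxA -hAST AD detZ det1 mulr1 -natrX => /eqP; apply/negP.
  by apply: (natR_neq0 hp he); rewrite expn_gt0 N0.
have key1' : (b + \rank (mf B) <= a)%N by lia.
split; first by lia.
split.
- case=> N [A' [g' [N0 hsurj' hker']]].
  have [X hX] : exists X : 'M[R]_(N,b), forall j, lincomb g' (col j X) = g j.
    by apply: (@exists_cols _ _ _ (fun j v => lincomb g' v = g j)) => j; exact: hsurj'.
  have [Y hY] : exists Y : 'M[R]_(b,N), forall j, lincomb g (col j Y) = g' j.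
    by apply: (@exists_cols _ _ _ (fun j v => lincomb g v = g' j)) => j; exact: hsurj.
  have gX u : lincomb g' (X *m u) = lincomb g u.
    by rewrite lincomb_mul; apply: eq_bigr => i _; rewrite hX.
  have gY u : lincomb g (Y *m u) = lincomb g' u.
    by rewrite lincomb_mul; apply: eq_bigr => i _; rewrite hY.
  have key2 : (a + N <= (b + N) + \rank (mf (col_mx B (0 : 'M_(N, c)))))%N.
    apply: (@mu_bound _ _ _ _ (block_mx A Y 0 1%:M) _ (block_mx 1%:M 0 X A')).
    + move=> v; rewrite -[v]vsubmxK mul_block_col !mul0mx !mul1mx add0r.
      rewrite -col_mx0 => /eq_col_mx [h1 h2].
      rewrite h2 mulmx0 addr0 in h1.
      have [w hw] := (hkerA _).1 h1.
      by exists w; rewrite mul_col_mx mul0mx -hw h2.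
    + move=> v; rewrite -[v]vsubmxK mul_block_col !mul0mx add0r mul1mx.
      set y1 := A *m usubmx v + Y *m dsubmx v.
      have : lincomb g' (dsubmx v - X *m y1) = 0.
        rewrite lincombB gX /y1 lincombD gY.
        have -> : lincomb g (A *m usubmx v) = 0 by apply/hkerg; eexists.
        by rewrite add0r subrr.
      move/hker' => [y2 hy2]; exists (col_mx y1 y2).
      by rewrite mul_block_col !mul1mx mul0mx addr0 -hy2 addrC subrK.
    + move=> y; rewrite -[y]vsubmxK mul_block_col !mul1mx !mul0mx addr0.
      set v2 := X *m usubmx y + A' *m dsubmx y.
      have : lincomb g (usubmx y - Y *m v2) = 0.
        rewrite lincombB gY /v2 lincombD gX.
        have -> : lincomb g' (A' *m dsubmx y) = 0 by apply/hker'; eexists.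
        by rewrite addr0 subrr.
      move/hkerg => [v1 hv1]; exists (col_mx v1 v2).
      by rewrite mul_block_col mul0mx mul1mx add0r -hv1 subrK.
  have hr : \rank (mf (col_mx B (0 : 'M_(N,c)))) = \rank (mf B).
    by rewrite map_col_mx map_mx0 -addsmxE addsmx0.
  rewrite hr in key2; lia.
- move=> ets.
  have kb : k = b by lia.
  subst k.
  case: (posnP b) => [b0 | bpos].
  + subst b.
    have z u : lincomb (fun _ : 'I_1 => (0 : M)) u = 0.
      by rewrite /lincomb big1 // => i _; rewrite scaler0.
    exists 1%N, 1%:M, (fun _ => 0); split => //.
    * move=> x; exists 0; have [u <-] := hsurj x.
      by rewrite z /lincomb big_ord0.
    * by move=> u; rewrite z; split => // _; exists u; rewrite mul1mx.
  + exists b, (A *m S), g; split => // u; split.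
    * move/hkerg => [v ->]; exists (T *m v).
      by rewrite mulmxA -hAST.
    * by case=> v ->; apply/hkerg; exists (S *m v); rewrite mulmxA.
Qed.

End Res.

Theorem lemma2p1 (p : nat) (R : comUnitRingType) (iota : Zpadic p -> R) :
  prime p -> Zp_embedding iota -> Zp_finite_algebra iota ->
  Zp_finite_module iota -> local_ring R ->
  forall (M : lmodType R), finite_module M ->
  forall (a b c : nat) (g : 'I_b -> M) (A : 'M[R]_(b, a)) (B : 'M[R]_(a, c)),
    free_resolution g A B ->
    forall t s : nat, tor1_res_dim A B t -> tensor_res_dim M s ->
      (s <= t)%N /\ (in_TR M <-> t = s).
Proof.
move=> hp he _ _ hloc; exact: (main_local hloc hp he).
Qed.
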